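(* Let $h>0$, $n\in\mathbb{N}$, and let $\lambda:\mathbb{T}\to\mathbb{R}$ be an $n$-cycle with values $\lambda_0,\dots,\lambda_{n-1}\in\mathbb{R}\setminus\{\pm\tfrac1h\}$, such that $0<|e_{\lambda}(nh)|\neq1$ and $0<|e_{-\lambda}(nh)|\neq1$. Define for $t\in\mathbb{T}$ $$p(t)=\lambda(t+2h),\quad q(t)=2\Delta_h\lambda(t+h)+\Delta_h\lambda(t+2h)-\lambda(t+2h)\lambda(t+3h),$$ $$r(t)=\Delta_h^2\lambda(t)+\lambda(t)\Delta_h\lambda(t+2h)-\lambda(t)\lambda(t+2h)\lambda(t+3h).$$ Then the third-order equation $$\Delta_h^3y(t)+p(t)\Delta_h^2y(t)+q(t)\Delta_h y(t)+r(t)y(t)=0,\qquad t\in\mathbb{T},$$ has Hyers–Ulam stability on $\mathbb{T}$ with Hyers–Ulam stability constant $K=K_0(\lambda)\bigl(K_0(-\lambda)\bigr)^2$.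
   Context: Fix $h>0$ and let $\mathbb{T}=\{0,h,2h,3h,\dots\}$. For $x:\mathbb{T}\to\mathbb{R}$, $\Delta_h x(t)=\frac{x(t+h)-x(t)}{h}$ and $\Delta_h^2x=\Delta_h(\Delta_h x)$, $\Delta_h^3x=\Delta_h(\Delta_h^2 x)$. An $n$-cycle is a function $\mu:\mathbb{T}\to\mathbb{R}$ with $\mu(t)=\mu_k$ whenever $t/h\equiv k\pmod n$, $k\in\{0,\dots,n-1\}$, which has period $n$ and no smaller period. For such $\mu$ define the discrete exponential $e_\mu(t)=\prod_{k=0}^{t/h-1}(1+h\mu(kh))$ (empty product $=1$), so $e_\mu(nh)=\prod_{k=0}^{n-1}(1+h\mu_k)$. For $k\in\{0,\dots,n-1\}$ define $$S_k(\mu)=\sum_{j=1}^{n}\prod_{i=0}^{j-1}\frac{1}{|1+h\mu_{(k+i)\bmod n}|},$$ (e.g. $S_0(\mu)=\frac{1}{|1+h\mu_0|}+\frac{1}{|1+h\mu_0||1+h\mu_1|}+\dots+\frac{1}{|1+h\mu_0|\cdots|1+h\mu_{n-1}|}$), and, when $0<|e_\mu(nh)|\neq1$, $$K_0(\mu)=\frac{h|e_\mu(nh)|}{\bigl|1-|e_\mu(nh)|\bigr|}\max\{S_0(\mu),\dots,S_{n-1}(\mu)\}.$$ Here $-\lambda$ denotes the $n$-cycle with values $-\lambda_0,\dots,-\lambda_{n-1}$. Hyers–Ulam stability: an equation $\mathcal{L}[y](t)=f(t)$, $t\in\mathbb{T}$ (with $\mathcal{L}$ a linear difference operator) has Hyers–Ulam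 stability on $\mathbb{T}$ with Hyers–Ulam stability constant $K>0$ if for every $\varepsilon>0$ and every $\xi:\mathbb{T}\to\mathbb{R}$ with $|\mathcal{L}[\xi](t)-f(t)|\le\varepsilon$ for all $t\in\mathbb{T}$, there is a solution $y:\mathbb{T}\to\mathbb{R}$ of the equation with $|\xi(t)-y(t)|\le K\varepsilon$ for all $t\in\mathbb{T}$. The minimum Hyers–Ulam stability constant is the smallest such $K$. *)

(* Defs.v *)
(* concrete reals R. The time scale T = {0,h,2h,...} is
   identified with nat via t = k*h; functions on T are functions nat -> R. *)
From Stdlib Require Import Reals Lra Lia.
Open Scope R_scope.

Definition delta (h : R) (x : nat -> R) : nat -> R :=
  fun k => (x (S k) - x k) / h.

Fixpoint rsum (f : nat -> R) (m : nat) : R :=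
  match m with O => 0 | S m' => rsum f m' + f m' end.
Fixpoint rprod (f : nat -> R) (m : nat) : R :=
  match m with O => 1 | S m' => rprod f m' * f m' end.

Fixpoint rmax_upto (f : nat -> R) (m : nat) : R :=
  match m with O => f O | S m' => Rmax (rmax_upto f m') (f (S m')) end.

Definition periodic (mu : nat -> R) (m : nat) : Prop :=
  forall k, mu (k + m)%nat = mu k.
Definition is_n_cycle (n : nat) (mu : nat -> R) : Prop :=
  (1 <= n)%nat /\ periodic mu n /\
  forall m, (1 <= m)%nat -> (m < n)%nat -> ~ periodic mu m.

Definition e_nh (h : R) (n : nat) (mu : nat -> R) : R :=
  rprod (fun k => 1 + h * mu k) n.

Definition S_k (h : R) (n : nat) (mu : nat -> R) (k : nat) : R :=
  rsum (fun j => rprod (fun i => / Rabs (1 + h * mu ((k + i) mod n)%nat)) (S j)) n.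

Definition K0 (h : R) (n : nat) (mu : nat -> R) : R :=
  h * Rabs (e_nh h n mu) / Rabs (1 - Rabs (e_nh h n mu))
    * rmax_upto (S_k h n mu) (n - 1).

Definition negf (mu : nat -> R) : nat -> R := fun k => - mu k.

Definition HU_stable (L : (nat -> R) -> nat -> R) (f : nat -> R) (K : R) : Prop :=
  0 < K /\
  forall (eps : R), 0 < eps -> forall xi : nat -> R,
    (forall t, Rabs (L xi t - f t) <= eps) ->
    exists y : nat -> R, (forall t, L y t = f t) /\
      forall t, Rabs (xi t - y t) <= K * eps.

Definition pcoef (h : R) (lam : nat -> R) : nat -> R := fun t => lam (t + 2)%nat.
Definition qcoef (h : R) (lam : nat -> R) : nat -> R := fun t =>
  2 * delta h lam (t + 1)%nat + delta h lam (t + 2)%nat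
  - lam (t + 2)%nat * lam (t + 3)%nat.
Definition rcoef (h : R) (lam : nat -> R) : nat -> R := fun t =>
  delta h (delta h lam) t + lam t * delta h lam (t + 2)%nat
  - lam t * lam (t + 2)%nat * lam (t + 3)%nat.

Definition L3 (h : R) (lam : nat -> R) (y : nat -> R) : nat -> R := fun t =>
  delta h (delta h (delta h y)) t + pcoef h lam t * delta h (delta h y) t
  + qcoef h lam t * delta h y t + rcoef h lam t * y t.

(* Main.v *)
Require Import Defs.
From Stdlib Require Import Reals Lra Lia.
From Coquelicot Require Import Coquelicot.
Open Scope R_scope.

Lemma rprod_shift f m : rprod f (S m) = f 0%nat * rprod (fun i => f (S i)) m.
Proof. induction m; simpl in *. ring. rewrite IHm. ring. Qed.

Lemma rsum_shift f m : rsum f (S m) = f 0%nat + rsum (fun i => f (S i)) m.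
Proof. induction m; simpl in *. ring. rewrite IHm. ring. Qed.

Lemma rsum_ext f g m : (forall i, f i = g i) -> rsum f m = rsum g m.
Proof. intro H; induction m; simpl; [ring| rewrite IHm, H; ring]. Qed.

Lemma rprod_ext f g m : (forall i, f i = g i) -> rprod f m = rprod g m.
Proof. intro H; induction m; simpl; [ring| rewrite IHm, H; ring]. Qed.

Lemma rsum_scal c f m : rsum (fun j => c * f j) m = c * rsum f m.
Proof. induction m; simpl; [ring| rewrite IHm; ring]. Qed.

Lemma rprod_pos f m : (forall i, 0 < f i) -> 0 < rprod f m.
Proof. intro H; induction m; simpl; [lra| apply Rmult_lt_0_compat; auto]. Qed.

Lemma rsum_nonneg f m : (forall i, 0 <= f i) -> 0 <= rsum f m.
Proof. intro H; induction m; simpl; [lra| specialize (H m); lra]. Qed.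

Lemma rsum_pos f m : (forall i, 0 < f i) -> (1 <= m)%nat -> 0 < rsum f m.
Proof.
  intros H Hm; destruct m; [lia|]. simpl.
  assert (0 <= rsum f m) by (apply rsum_nonneg; intro i; specialize (H i); lra).
  specialize (H m); lra.
Qed.

Lemma rprod_abs f m : Rabs (rprod f m) = rprod (fun i => Rabs (f i)) m.
Proof. induction m; simpl. apply Rabs_R1. rewrite Rabs_mult, IHm; ring. Qed.

Lemma rprod_inv f m : rprod (fun i => / f i) m = / rprod f m.
Proof. induction m; simpl. now rewrite Rinv_1. rewrite IHm, Rinv_mult; ring. Qed.

Lemma rmax_ge f m i : (i <= m)%nat -> f i <= rmax_upto f m.
Proof.
  induction m; intro H; simpl.
  - replace i with 0%nat by lia; lra.
  - destruct (Nat.eq_dec i (S m)) as [->|Hn]. apply Rmax_r.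
    eapply Rle_trans; [apply IHm; lia| apply Rmax_l].
Qed.

Lemma per_mul nu n : periodic nu n -> forall q r, nu (r + q * n)%nat = nu r.
Proof.
  intros P q; induction q; intro r. now rewrite Nat.add_0_r.
  replace (r + S q * n)%nat with ((r + q*n) + n)%nat by lia.
  rewrite P; auto.
Qed.

Lemma per_mod nu n : periodic nu n -> (1 <= n)%nat -> forall x, nu (x mod n) = nu x.
Proof.
  intros P Hn x. rewrite (Nat.div_mod x n) at 2 by lia.
  rewrite Nat.add_comm, Nat.mul_comm. symmetry; apply per_mul; auto.
Qed.

Lemma rprod_period f n k : periodic f n -> (forall i, f i <> 0) ->
  rprod (fun i => f (k + i)%nat) n = rprod f n.
Proof.
  intros P Hz. induction k.
  - apply rprod_ext; intro i; reflexivity.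
  - rewrite <- IHk.
    assert (E1 : rprod (fun i => f (k + i)%nat) (S n) = rprod (fun i => f (k+i)%nat) n * f k).
    { simpl. rewrite P. reflexivity. }
    rewrite rprod_shift in E1.
    rewrite (rprod_ext (fun i => f (k + S i)%nat) (fun i => f (S k + i)%nat)) in E1
      by (intro i; f_equal; lia).
    rewrite Nat.add_0_r in E1.
    apply (Rmult_eq_reg_l (f k)); [|apply Hz]. rewrite E1; ring.
Qed.

Definition ia h (nu : nat -> R) k := / Rabs (1 + h * nu k).
Definition Pp h nu k j := rprod (fun i => ia h nu (k + i)%nat) j.
Definition Sp h n nu k := rsum (fun j => Pp h nu k (S j)) n.

Lemma ia_pos h nu k : 1 + h * nu k <> 0 -> 0 < ia h nu k.
Proof. intro H; unfold ia; apply Rinv_0_lt_compat, Rabs_pos_lt, H. Qed.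

Lemma Pp_pos h nu k j : (forall k, 1 + h * nu k <> 0) -> 0 < Pp h nu k j.
Proof. intro H; unfold Pp; apply rprod_pos; intro; apply ia_pos, H. Qed.

Lemma Sp_nonneg h n nu k : (forall k, 1 + h * nu k <> 0) -> 0 <= Sp h n nu k.
Proof. intro H; unfold Sp; apply rsum_nonneg; intro; apply Rlt_le, Pp_pos, H. Qed.

Lemma Pp_S h nu k j : Pp h nu k (S j) = ia h nu k * Pp h nu (S k) j.
Proof.
  unfold Pp; rewrite rprod_shift, Nat.add_0_r; f_equal.
  apply rprod_ext; intro i; f_equal; lia.
Qed.

Lemma Pp_n h n nu k : periodic nu n -> (forall k, 1 + h * nu k <> 0) ->
  Pp h nu k n = / Rabs (e_nh h n nu).
Proof.
  intros P Hz. unfold Pp.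
  rewrite (rprod_period (ia h nu) n k).
  - unfold ia, e_nh. rewrite rprod_abs, <- rprod_inv. reflexivity.
  - intro i; unfold ia; rewrite P; reflexivity.
  - intro i; apply Rgt_not_eq, ia_pos, Hz.
Qed.

Lemma Sp_id h n nu k : periodic nu n -> (forall k, 1 + h * nu k <> 0) ->
  Rabs (1 + h * nu k) * Sp h n nu k = 1 + Sp h n nu (S k) - / Rabs (e_nh h n nu).
Proof.
  intros P Hz. unfold Sp.
  rewrite <- rsum_scal.
  rewrite (rsum_ext _ (fun j => Pp h nu (S k) j)).
  2:{ intro j. rewrite Pp_S. unfold ia. field. apply Rabs_no_R0, Hz. }
  assert (A := rsum_shift (fun j => Pp h nu (S k) j) n).
  simpl in A. rewrite (Pp_n h n nu (S k) P Hz) in A.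
  replace (Pp h nu (S k) 0) with 1 in A by reflexivity. lra.
Qed.

Lemma Sp_le h n nu k : (1 <= n)%nat -> periodic nu n ->
  Sp h n nu k <= rmax_upto (S_k h n nu) (n - 1).
Proof.
  intros Hn P.
  replace (Sp h n nu k) with (S_k h n nu (k mod n)).
  - apply rmax_ge. pose proof (Nat.mod_upper_bound k n). lia.
  - unfold S_k, Sp, Pp, ia. apply rsum_ext; intro j. apply rprod_ext; intro i.
    rewrite (per_mod nu n P Hn).
    rewrite (Nat.div_mod k n) at 2 by lia.
    replace (n * (k / n) + k mod n + i)%nat with ((k mod n + i) + (k/n) * n)%nat by lia.
    rewrite per_mul; auto.
Qed.

Lemma K0_pos h n nu : 0 < h -> (1 <= n)%nat -> (forall k, 1 + h * nu k <> 0) ->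
  0 < Rabs (e_nh h n nu) -> Rabs (e_nh h n nu) <> 1 -> 0 < K0 h n nu.
Proof.
  intros Hh Hn Hz HE HE1. unfold K0.
  assert (0 < rmax_upto (S_k h n nu) (n - 1)).
  { eapply Rlt_le_trans; [| apply (rmax_ge _ _ 0); lia].
    unfold S_k. apply rsum_pos; auto. intro j; apply rprod_pos; intro i.
    apply Rinv_0_lt_compat, Rabs_pos_lt, Hz. }
  assert (0 < Rabs (1 - Rabs (e_nh h n nu))) by (apply Rabs_pos_lt; lra).
  apply Rmult_lt_0_compat; auto. unfold Rdiv.
  apply Rmult_lt_0_compat; [apply Rmult_lt_0_compat; auto|]. apply Rinv_0_lt_compat; auto.
Qed.

Lemma final_bound h n nu k eps : 0 < h -> 0 <= eps -> (1 <= n)%nat -> periodic nu n ->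
  (forall k, 1 + h * nu k <> 0) ->
  0 < Rabs (e_nh h n nu) -> Rabs (e_nh h n nu) <> 1 ->
  h * eps * (Rabs (e_nh h n nu) * Sp h n nu k / Rabs (1 - Rabs (e_nh h n nu)))
  <= K0 h n nu * eps.
Proof.
  intros Hh He Hn P Hz HE HE1. unfold K0.
  set (E := Rabs (e_nh h n nu)) in *.
  assert (0 < Rabs (1 - E)) by (apply Rabs_pos_lt; lra).
  assert (Hs := Sp_le h n nu k Hn P).
  set (c := h * E / Rabs (1 - E)).
  assert (0 <= c). { unfold c, Rdiv. apply Rmult_le_pos; [apply Rmult_le_pos; lra|].
    apply Rlt_le, Rinv_0_lt_compat; auto. }
  replace (h * eps * (E * Sp h n nu k / Rabs (1 - E))) with (c * Sp h n nu k * eps)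
    by (unfold c; field; lra).
  apply Rmult_le_compat_r; auto. apply Rmult_le_compat_l; auto.
Qed.

Fixpoint zrec (b g : nat -> R) (h : R) (t : nat) : R :=
  match t with O => 0 | S t => b t * zrec b g h t + h * g t end.

Lemma core_small h n nu m g eps : 0 < h -> 0 <= eps -> (1 <= n)%nat -> periodic nu n ->
  (forall k, 1 + h * nu k <> 0) ->
  0 < Rabs (e_nh h n nu) -> Rabs (e_nh h n nu) < 1 ->
  (forall t, Rabs (g t) <= eps) ->
  exists z, (forall t, delta h z t - nu (t + m)%nat * z t = g t) /\
    forall t, Rabs (z t) <= h * eps * (Rabs (e_nh h n nu) * Sp h n nu (t + m) / Rabs (1 - Rabs (e_nh h n nu))).
Proof.
  intros Hh He Hn P Hz HE HE1 Hg.
  set (b := fun t => 1 + h * nu (t + m)%nat).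
  exists (zrec b g h). split.
  - intro t. unfold delta. simpl. unfold b. field. apply Rgt_not_eq; lra.
  - intro t. rewrite (Rabs_pos_eq (1 - Rabs (e_nh h n nu))) by lra.
    set (E := Rabs (e_nh h n nu)) in *.
    induction t.
    + simpl. rewrite Rabs_R0. apply Rmult_le_pos; [apply Rmult_le_pos; lra|].
      unfold Rdiv. apply Rmult_le_pos; [apply Rmult_le_pos; [lra| apply Sp_nonneg; auto]|].
      apply Rlt_le, Rinv_0_lt_compat; lra.
    + simpl zrec. eapply Rle_trans; [apply Rabs_triang|].
      rewrite !Rabs_mult, (Rabs_pos_eq h) by lra.
      assert (Hid := Sp_id h n nu (t + m) P Hz). fold E in Hid.
      replace (S t + m)%nat with (S (t + m)) by lia.
      assert (Hb : Rabs (b t) * Rabs (zrec b g h t) <= Rabs (b t) * (h * eps * (E * Sp h n nu (t + m) / (1 - E))))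
        by (apply Rmult_le_compat_l; [apply Rabs_pos| auto]).
      specialize (Hg t).
      assert (h * Rabs (g t) <= h * eps) by (apply Rmult_le_compat_l; lra).
      replace (h * eps * (E * Sp h n nu (S (t + m)) / (1 - E))) with
        (Rabs (b t) * (h * eps * (E * Sp h n nu (t + m) / (1 - E))) + h * eps).
      lra.
      unfold b. replace (Sp h n nu (S (t+m))) with
        (Rabs (1 + h * nu (t + m)%nat) * Sp h n nu (t + m) - 1 + / E) by lra.
      field. split; apply Rgt_not_eq; lra.
Qed.

Lemma sum_n_rsum f N : sum_n f N = rsum f (S N).
Proof.
  induction N. rewrite sum_O. simpl. rewrite Rplus_0_l. reflexivity.
  rewrite sum_Sn, IHN. simpl. reflexivity.
Qed.

Lemma Series_bound a M : ex_series a -> (forall N, sum_n a N <= M) -> Series a <= M.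
Proof.
  intros [l Hl] HM. rewrite (is_series_unique a l Hl).
  assert (H := is_lim_seq_le (sum_n a) (fun _ => M) l M HM Hl (is_lim_seq_const M)).
  exact H.
Qed.

Lemma partial_big h n nu J k : periodic nu n -> (forall k, 1 + h * nu k <> 0) ->
  1 < Rabs (e_nh h n nu) ->
  rsum (fun j => Pp h nu k (S j)) J <=
  Rabs (e_nh h n nu) * Sp h n nu k / (Rabs (e_nh h n nu) - 1).
Proof.
  intros P Hz HE. set (E := Rabs (e_nh h n nu)) in *.
  revert k; induction J; intro k.
  - simpl. unfold Rdiv. apply Rmult_le_pos; [apply Rmult_le_pos; [lra|apply Sp_nonneg; auto]|].
    apply Rlt_le, Rinv_0_lt_compat; lra.
  - rewrite rsum_shift.
    rewrite (rsum_ext _ (fun j => ia h nu k * Pp h nu (S k) (S j))) by (intro; apply Pp_S).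
    rewrite rsum_scal, Pp_S. replace (Pp h nu (S k) 0) with 1 by reflexivity.
    assert (Hid := Sp_id h n nu k P Hz). fold E in Hid.
    specialize (IHJ (S k)).
    assert (Hia := ia_pos h nu k (Hz k)).
    replace (E * Sp h n nu k / (E - 1)) with
      (ia h nu k * (1 + E * Sp h n nu (S k) / (E - 1))).
    + rewrite <- Rmult_plus_distr_l. apply Rmult_le_compat_l; lra.
    + unfold ia. assert (Ha : Rabs (1 + h * nu k) <> 0) by (apply Rabs_no_R0, Hz).
      replace (Sp h n nu (S k)) with (Rabs (1 + h * nu k) * Sp h n nu k - 1 + / E) by lra.
      field. split; [apply Rgt_not_eq; lra| split; [apply Rgt_not_eq; lra| auto]].
Qed.

Lemma ex_series_Pp h n nu k : periodic nu n -> (forall k, 1 + h * nu k <> 0) ->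
  1 < Rabs (e_nh h n nu) -> ex_series (fun j => Pp h nu k (S j)).
Proof.
  intros P Hz HE.
  apply (ex_finite_lim_seq_incr _ (Rabs (e_nh h n nu) * Sp h n nu k / (Rabs (e_nh h n nu) - 1))).
  - intro N. rewrite sum_Sn. simpl. unfold plus; simpl.
    assert (0 < Pp h nu k (S (S N))) by (apply Pp_pos; auto). lra.
  - intro N. rewrite sum_n_rsum. apply partial_big; auto.
Qed.

Lemma core_big h n nu m g eps : 0 < h -> 0 <= eps -> (1 <= n)%nat -> periodic nu n ->
  (forall k, 1 + h * nu k <> 0) ->
  1 < Rabs (e_nh h n nu) ->
  (forall t, Rabs (g t) <= eps) ->
  exists z, (forall t, delta h z t - nu (t + m)%nat * z t = g t) /\
    forall t, Rabs (z t) <= h * eps * (Rabs (e_nh h n nu) * Sp h n nu (t + m) / Rabs (1 - Rabs (e_nh h n nu))).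
Proof.
  intros Hh He Hn P Hz HE Hg.
  set (b := fun t => 1 + h * nu (t + m)%nat).
  set (w := fun t j => g (t + j)%nat * rprod (fun i => / b (t + i)%nat) (S j)).
  assert (Hw : forall t j, Rabs (w t j) <= eps * Pp h nu (t + m) (S j)).
  { intros t j. unfold w. rewrite Rabs_mult, rprod_abs.
    rewrite (rprod_ext _ (fun i => ia h nu (t + m + i)%nat)).
    2:{ intro i. unfold b, ia. rewrite Rabs_inv. replace (t + i + m)%nat with (t + m + i)%nat by lia. reflexivity. }
    apply Rmult_le_compat_r. apply Rlt_le, Pp_pos; auto. apply Hg. }
  assert (Hex : forall t, ex_series (w t)).
  { intro t. apply (@ex_series_le R_AbsRing R_CompleteNormedModule _ (fun j => eps * Pp h nu (t + m) (S j))).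
    - intro j. unfold norm; simpl. unfold abs; simpl. apply Hw.
    - exact (@ex_series_scal_l R_AbsRing R_NormedModule eps _ (ex_series_Pp h n nu (t+m) P Hz HE)). }
  assert (Hexa : forall t, ex_series (fun j => Rabs (w t j))).
  { intro t. apply (@ex_series_le R_AbsRing R_CompleteNormedModule _ (fun j => eps * Pp h nu (t + m) (S j))).
    - intro j. unfold norm; simpl. unfold abs; simpl. rewrite Rabs_Rabsolu. apply Hw.
    - exact (@ex_series_scal_l R_AbsRing R_NormedModule eps _ (ex_series_Pp h n nu (t+m) P Hz HE)). }
  exists (fun t => - h * Series (w t)). split.
  - intro t. unfold delta.
    rewrite (Series_incr_1 (w t) (Hex t)).
    rewrite (Series_ext (fun k => w t (S k)) (fun k => / b t * w (S t) k)).
    2:{ intro j. unfold w. rewrite (rprod_shift _ (S j)).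
        replace (g (t + S j)%nat) with (g (S t + j)%nat) by (f_equal; lia).
        rewrite Nat.add_0_r.
        rewrite (rprod_ext (fun i => / b (t + S i)%nat) (fun i => / b (S t + i)%nat))
          by (intro i; do 2 f_equal; lia). ring. }
    rewrite Series_scal_l.
    replace (w t 0%nat) with (g t * / b t) by (unfold w; simpl; rewrite Nat.add_0_r; ring). cbv beta.
    assert (Hb : b t <> 0) by apply Hz.
    unfold b in *. field. split; auto. apply Rgt_not_eq; lra.
  - intro t. rewrite Rabs_mult, Rabs_Ropp, (Rabs_pos_eq h) by lra.
    rewrite (Rabs_left1 (1 - _)) by lra.
    replace (- (1 - Rabs (e_nh h n nu))) with (Rabs (e_nh h n nu) - 1) by ring.
    rewrite Rmult_assoc. apply Rmult_le_compat_l; [lra|].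
    eapply Rle_trans; [apply Series_Rabs, Hexa|].
    eapply Rle_trans.
    { apply (Series_le _ (fun j => eps * Pp h nu (t + m) (S j))).
      - intro j; split; [apply Rabs_pos| apply Hw].
      - exact (@ex_series_scal_l R_AbsRing R_NormedModule eps _ (ex_series_Pp h n nu (t+m) P Hz HE)). }
    rewrite Series_scal_l. apply Rmult_le_compat_l; auto.
    apply Series_bound. apply (ex_series_Pp h n nu); auto.
    intro N. rewrite sum_n_rsum. apply (partial_big h n nu); auto.
Qed.

Lemma core h n nu m g eps : 0 < h -> 0 <= eps -> (1 <= n)%nat -> periodic nu n ->
  (forall k, 1 + h * nu k <> 0) ->
  0 < Rabs (e_nh h n nu) -> Rabs (e_nh h n nu) <> 1 ->
  (forall t, Rabs (g t) <= eps) ->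
  exists z, (forall t, delta h z t - nu (t + m)%nat * z t = g t) /\
    forall t, Rabs (z t) <= K0 h n nu * eps.
Proof.
  intros Hh He Hn P Hz HE HE1 Hg.
  assert (H : exists z, (forall t, delta h z t - nu (t + m)%nat * z t = g t) /\
    forall t, Rabs (z t) <= h * eps * (Rabs (e_nh h n nu) * Sp h n nu (t + m) / Rabs (1 - Rabs (e_nh h n nu)))).
  { destruct (Rlt_or_le (Rabs (e_nh h n nu)) 1).
    - apply core_small; auto.
    - apply core_big; auto. lra. }
  destruct H as [z [Hz1 Hz2]]. exists z; split; auto.
  intro t. eapply Rle_trans; [apply Hz2| apply final_bound; auto].
Qed.

Definition Aop h (mu : nat -> R) (x : nat -> R) t := delta h x t - mu t * x t.

Lemma Aop_ext h mu x x' t : (forall s, x s = x' s) -> Aop h mu x t = Aop h mu x' t.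
Proof. intro H. unfold Aop, delta. rewrite !H. reflexivity. Qed.

Lemma L3_fact h lam y t : 0 < h ->
  L3 h lam y t = Aop h (fun t => lam (t + 3)%nat)
    (Aop h (fun t => negf lam (t + 2)%nat) (Aop h (fun t => negf lam (t + 0)%nat) y)) t.
Proof.
  intro Hh. unfold L3, Aop, pcoef, qcoef, rcoef, delta, negf.
  replace (t + 3)%nat with (S (S (S t))) by lia.
  replace (t + 2)%nat with (S (S t)) by lia.
  replace (t + 1)%nat with (S t) by lia.
  replace (S t + 2)%nat with (S (S (S t))) by lia.
  rewrite !Nat.add_0_r.
  field. apply Rgt_not_eq; lra.
Qed.

Lemma L3_lin h lam x z t : L3 h lam (fun s => x s - z s) t = L3 h lam x t - L3 h lam z t.
Proof. unfold L3, delta. cbv beta. unfold Rdiv. ring. Qed.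

Theorem theorem5p2 (h : R) (n : nat) (lam : nat -> R) :
  0 < h ->
  is_n_cycle n lam ->
  (forall k, lam k <> 1 / h /\ lam k <> - (1 / h)) ->
  0 < Rabs (e_nh h n lam) -> Rabs (e_nh h n lam) <> 1 ->
  0 < Rabs (e_nh h n (negf lam)) -> Rabs (e_nh h n (negf lam)) <> 1 ->
  HU_stable (L3 h lam) (fun _ => 0)
    (K0 h n lam * (K0 h n (negf lam)) ^ 2).
Proof.
  intros Hh [Hn [P _]] Hl HE HE1 HF HF1.
  assert (Hz : forall k, 1 + h * lam k <> 0).
  { intros k Hk. destruct (Hl k) as [_ H2]. apply H2. field_simplify; [|apply Rgt_not_eq; lra].
    apply (Rmult_eq_reg_l h); [|apply Rgt_not_eq; lra]. field_simplify. lra.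
    apply Rgt_not_eq; lra. }
  assert (Hzn : forall k, 1 + h * negf lam k <> 0).
  { intros k Hk. destruct (Hl k) as [H1 _]. apply H1. unfold negf in Hk.
    apply (Rmult_eq_reg_l h); [|apply Rgt_not_eq; lra]. field_simplify. lra.
    apply Rgt_not_eq; lra. }
  assert (Pn : periodic (negf lam) n) by (intro k; unfold negf; rewrite P; reflexivity).
  assert (K1 := K0_pos h n lam Hh Hn Hz HE HE1).
  assert (K2 := K0_pos h n (negf lam) Hh Hn Hzn HF HF1).
  split.
  { apply Rmult_lt_0_compat; auto. apply pow_lt; auto. }
  intros eps Heps xi Hxi.
  destruct (core h n lam 3 (L3 h lam xi) eps Hh (Rlt_le _ _ Heps) Hn P Hz HE HE1)
    as [z1 [E1 B1]].
  { intro t. specialize (Hxi t). rewrite Rminus_0_r in Hxi. auto. }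
  destruct (core h n (negf lam) 2 z1 (K0 h n lam * eps) Hh) as [z2 [E2 B2]]; auto.
  { apply Rmult_le_pos; lra. }
  destruct (core h n (negf lam) 0 z2 (K0 h n (negf lam) * (K0 h n lam * eps)) Hh)
    as [z3 [E3 B3]]; auto.
  { apply Rmult_le_pos; [lra|]. apply Rmult_le_pos; lra. }
  exists (fun s => xi s - z3 s). split.
  - intro t. rewrite L3_lin, (L3_fact h lam z3 t Hh).
    assert (Hb : forall s, Aop h (fun t => negf lam (t + 2)%nat)
                   (Aop h (fun t => negf lam (t + 0)%nat) z3) s = z1 s).
    { intro s. rewrite (Aop_ext _ _ _ z2). apply E2. intro s'. apply E3. }
    rewrite (Aop_ext _ _ _ z1 _ Hb). unfold Aop. rewrite E1. ring.
  - intro t. replace (xi t - (xi t - z3 t)) with (z3 t) by ring.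
    eapply Rle_trans; [apply B3|]. right; ring.
Qed.
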